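(* $\chi_i'(S_{C_5}^1)=3$ and $\chi_i'(S_{C_5}^n)=4$ for every integer $n\ge 2$, where $C_5$ is the cycle on $5$ vertices.
   Context: For a graph $H$ with at least one edge, an injective edge $k$-coloring is a map $c:E(H)\to\{1,\dots,k\}$ such that whenever $e_1=xy$, $e_2=yz$, $e_3=zu$ are edges of $H$ with $x,y,z$ distinct and $u\notin\{y,z\}$ (the case $u=x$ being allowed), we have $c(e_1)\ne c(e_3)$. The injective chromatic index $\chi_i'(H)$ is the least $k$ for which such a coloring exists. For a graph $G$ and positive integer $n$, the generalized Sierpiński graph $S_G^n$ has vertex set $V(G)^n$, and $(u_1,\dots,u_n)$, $(v_1,\dots,v_n)$ are adjacent if and only if there is $d\in\{1,\dots,n\}$ with $u_i=v_i$ for $i<d$, $u_dv_d\in E(G)$, and $u_i=v_d$, $v_i=u_d$ for all $i>d$. *)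

(* Defs.v *)
From mathcomp Require Import all_boot.
Set Implicit Arguments. Unset Strict Implicit. Unset Printing Implicit Defensive.

(* A (simple) graph is given by a finite vertex type V and a symmetric,
   irreflexive adjacency relation e : rel V; its edges are the 2-sets
   [set x; y] with e x y. *)

(* An injective edge k-coloring: colors 'I_k (i.e. k colors); the color of
   the edge xy is c [set x; y] (only values on edges matter). *)
Definition inj_edge_coloring (V : finType) (e : rel V) (k : nat)
    (c : {set V} -> 'I_k) : Prop :=
  forall x y z u : V,
    e x y -> e y z -> e z u ->
    x != y -> y != z -> x != z ->
    u != y -> u != z ->
    c [set x; y] != c [set z; u].

Definition inj_edge_colorable (V : finType) (e : rel V) (k : nat) : Prop :=
  exists c : {set V} -> 'I_k, inj_edge_coloring e c.

Definition inj_chromatic_index_is (V : finType) (e : rel V) (k : nat) : Prop :=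
  inj_edge_colorable e k /\ forall j, j < k -> ~ inj_edge_colorable e j.

(* Generalized Sierpinski graph S_G^n: vertices are words of length n over V,
   coordinates indexed 0..n-1 (coordinate i here is coordinate i+1 of the paper). *)
Definition sierp_adj (V : finType) (e : rel V) (n : nat) : rel {ffun 'I_n -> V} :=
  fun u v => [exists d : 'I_n,
    [&& [forall i : 'I_n, (i < d) ==> (u i == v i)],
        e (u d) (v d) &
        [forall i : 'I_n, (d < i) ==> ((u i == v d) && (v i == u d))]]].

Definition C5 : rel 'I_5 :=
  fun x y => ((x.+1 %% 5) == y) || ((y.+1 %% 5) == x).

Arguments sierp_adj {V} e n : rename.

(* Main.v *)
Require Import Defs.
From mathcomp Require Import all_boot zify.
Set Implicit Arguments. Unset Strict Implicit. Unset Printing Implicit Defensive.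


Definition cset (W : finType) k (g : W -> W -> 'I_k) (d0 : 'I_k) (T : {set W}) : 'I_k :=
  if [pick p in T] is Some p then
    (if [pick q in T :\ p] is Some q then g p q else d0) else d0.

Lemma cset2 (W : finType) k (g : W -> W -> 'I_k) d0 :
  (forall a b, g a b = g b a) -> forall a b, a != b -> cset g d0 [set a; b] = g a b.
Proof.
move=> gs a b nab; rewrite /cset.
case: pickP => [p Hp|H]; last by move: (H a); rewrite set21.
case: pickP => [q Hq|H].
  move: Hp Hq; rewrite !inE => /orP[]/eqP -> /andP[Hqp /orP[]/eqP Hq]; subst q.
  - by rewrite eqxx in Hqp.
  - by [].
  - by rewrite gs.
  - by rewrite eqxx in Hqp.
move: Hp; rewrite !inE => /orP[] /eqP Hp; subst p.
  by move: (H b); rewrite !inE eqxx orbT andbT eq_sym nab.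
by move: (H a); rewrite !inE eqxx andbT nab.
Qed.

Definition colf (V W : finType) k (f : V -> W) (g : W -> W -> 'I_k) (d0 : 'I_k) (S : {set V}) : 'I_k :=
  cset g d0 (f @: S).

Lemma transfer (V W : finType) (e : rel V) (h lv : rel W) k (f : V -> W)
  (g : W -> W -> 'I_k) (d0 : 'I_k) :
  (forall x y, e x y -> h (f x) (f y)) ->
  (forall w, ~~ h w w) ->
  (forall x y z, e x y -> e y z -> x != z -> f x != f z) ->
  (forall x y z, e x y -> e y z -> x != z -> lv (f x) (f y) || lv (f y) (f z)) ->
  (forall a b, g a b = g b a) ->
  (forall a b c d, h a b -> h b c -> h c d -> a != c -> b != d ->
      lv a b || lv b c -> lv b c || lv c d -> g a b != g c d) ->
  inj_edge_coloring e (colf f g d0).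
Proof.
move=> hom irr li one gs chk x y z u exy eyz ezu nxy nyz nxz nuy nuz.
have ne a b : e a b -> f a != f b.
  by move=> eab; apply/eqP=> E; move: (hom _ _ eab); rewrite E (negbTE (irr _)).
rewrite /colf !imsetU1 !imset_set1 !cset2 //; try exact: ne.
apply: chk; try exact: hom.
- exact: li exy eyz nxz.
- by apply: (li _ _ _ eyz ezu); rewrite eq_sym.
- exact: one exy eyz nxz.
- by apply: (one _ _ _ eyz ezu); rewrite eq_sym.
Qed.


Lemma C5irr (a : 'I_5) : ~~ C5 a a.
Proof. by case: a => [[|[|[|[|[|?]]]]] H]. Qed.

Lemma C5sym (a b : 'I_5) : C5 a b = C5 b a.
Proof. by rewrite /C5 orbC. Qed.

Definition Ed n (y x : {ffun 'I_n -> 'I_5}) (d : 'I_n) :=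
  [/\ forall i : 'I_n, i < d -> y i = x i, C5 (y d) (x d) &
      forall i : 'I_n, d < i -> y i = x d /\ x i = y d].

Lemma adjE n (y x : {ffun 'I_n -> 'I_5}) : sierp_adj C5 n y x -> exists d, Ed y x d.
Proof.
case/existsP=> d /and3P[/forallP H1 H2 /forallP H3]; exists d; split => //.
- by move=> i lt; move: (H1 i); rewrite lt => /eqP.
- by move=> i lt; move: (H3 i); rewrite lt => /andP[/eqP -> /eqP ->].
Qed.

Lemma adj_sym n (x y : {ffun 'I_n -> 'I_5}) : sierp_adj C5 n x y -> sierp_adj C5 n y x.
Proof.
move/adjE=> [d [H1 H2 H3]]; apply/existsP; exists d; apply/and3P; split.
- by apply/forallP=> i; apply/implyP=> lt; rewrite H1.
- by rewrite C5sym.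
- by apply/forallP=> i; apply/implyP=> lt; case: (H3 i lt) => -> ->; rewrite !eqxx.
Qed.

Lemma Ed_same n (y x z : {ffun 'I_n -> 'I_5}) d : Ed y x d -> Ed y z d -> x d = z d -> x = z.
Proof.
move=> [A1 _ A3] [B1 _ B3] Exz; apply/ffunP=> i.
case: (ltngtP i d) => [lt|gt|/val_inj ->] //.
- by rewrite -A1 // B1.
- by case: (A3 i gt) => _ ->; case: (B3 i gt) => _ ->.
Qed.

Lemma Ed_lt n (y x z : {ffun 'I_n -> 'I_5}) d1 d2 (i : 'I_n) :
  Ed y x d1 -> Ed y z d2 -> d1 < d2 -> d2 < i -> False.
Proof.
move=> [A1 _ A3] [B1 B2 B3] l12 l2i.
have l1i : d1 < i by apply: ltn_trans l2i.
case: (A3 _ l12) => Yd2 _; case: (A3 _ l1i) => Yi _; case: (B3 _ l2i) => Yi' _.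
by move: B2; rewrite Yd2 -Yi Yi' (negbTE (C5irr _)).
Qed.

Lemma Ed_eqd n (y x z : {ffun 'I_n -> 'I_5}) d (i : 'I_n) :
  Ed y x d -> Ed y z d -> d < i -> x = z.
Proof.
move=> A B lt; apply: (Ed_same A B).
by case: A => _ _ /(_ i lt) [<- _]; case: B => _ _ /(_ i lt) [<- _].
Qed.


Definition l1 m : 'I_(m.+2) := ord_max.
Definition l0 m : 'I_(m.+2) := inord m.
Definition pj m (w : {ffun 'I_m.+2 -> 'I_5}) : 'I_5 * 'I_5 := (w (l0 m), w (l1 m)).
Definition Hr : rel ('I_5 * 'I_5) := fun p q =>
  ((p.1 == q.1) && C5 p.2 q.2) || [&& p.1 == q.2, p.2 == q.1 & C5 p.1 q.1]
  || [&& p.1 == p.2, q.1 == q.2 & C5 p.1 q.1].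
Definition lvr : rel ('I_5 * 'I_5) := fun p q => p.1 == q.1.

Lemma l0v m : val (l0 m) = m. Proof. by rewrite /l0 /= inordK. Qed.
Lemma l1v m : val (l1 m) = m.+1. Proof. by []. Qed.

Lemma ltl1 m (d : 'I_m.+2) : d != l1 m -> d < l1 m.
Proof.
move=> nd; rewrite ltn_neqAle -ltnS ltn_ord andbT.
by apply: contra nd => /eqP E; apply/eqP/val_inj.
Qed.

Lemma trich m (d : 'I_m.+2) : [\/ d = l1 m, d = l0 m | d < m].
Proof.
have [->|nd1] := eqVneq d (l1 m); first by constructor 1.
have [->|nd0] := eqVneq d (l0 m); first by constructor 2.
constructor 3. have := ltl1 nd1; rewrite l1v ltnS leq_eqVlt => /orP[/eqP E|//].
by case/eqP: nd0; apply/val_inj; rewrite l0v.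
Qed.

Lemma l0l1 m : l0 m < l1 m. Proof. by rewrite l0v. Qed.

Lemma hom m (x y : {ffun 'I_m.+2 -> 'I_5}) : sierp_adj C5 m.+2 x y -> Hr (pj x) (pj y).
Proof.
move/adjE=> [d [A1 A2 A3]]; rewrite /Hr /pj /=.
case: (trich d) => [E|E|lt]; subst.
- by rewrite A1 ?l0l1 // eqxx A2.
- by case: (A3 _ (l0l1 m)) => -> ->; rewrite !eqxx A2 orbT.
- have l0' : d < l0 m by rewrite l0v.
  have l1' : d < l1 m by rewrite l1v ltnW.
  case: (A3 _ l0') => -> ->; case: (A3 _ l1') => -> ->.
  by rewrite !eqxx C5sym A2 !orbT.
Qed.

Lemma LIa m (y x z : {ffun 'I_m.+2 -> 'I_5}) d2 :
  Ed y x (l1 m) -> Ed y z d2 -> x != z -> pj x != pj z.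
Proof.
move=> A B nxz; apply/eqP => [[E0 E1]].
have yx0 : y (l0 m) = x (l0 m) by case: A => /(_ _ (l0l1 m)).
case: (trich d2) => [E|E|lt]; subst.
- by case/eqP: nxz; apply: (Ed_same A B).
- by case: B => _; rewrite -E0 -yx0 (negbTE (C5irr _)).
- have l0' : d2 < l0 m by rewrite l0v.
  case: B => _ B2 /(_ _ l0') [Y0 Z0].
  by move: B2; rewrite -Y0 yx0 E0 Z0 (negbTE (C5irr _)).
Qed.

Lemma LI m (x y z : {ffun 'I_m.+2 -> 'I_5}) :
  sierp_adj C5 m.+2 x y -> sierp_adj C5 m.+2 y z -> x != z ->
  (pj x != pj z) && (lvr (pj x) (pj y) || lvr (pj y) (pj z)).
Proof.
move=> /adj_sym /adjE [d1 A] /adjE [d2 B] nxz.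
have [E1|n1] := eqVneq d1 (l1 m).
  subst d1; rewrite (LIa A B nxz) /lvr /=.
  by case: A => /(_ _ (l0l1 m)) ->; rewrite eqxx.
have [E2|n2] := eqVneq d2 (l1 m).
  subst d2; rewrite eq_sym (LIa B A _); last by rewrite eq_sym.
  by rewrite /lvr /=; case: B => /(_ _ (l0l1 m)) ->; rewrite eqxx orbT.
exfalso.
case: (ltngtP d1 d2) => [lt|gt|/val_inj E].
- exact: (Ed_lt A B lt (ltl1 n2)).
- exact: (Ed_lt B A gt (ltl1 n1)).
- by subst d2; case/eqP: nxz; apply: (Ed_eqd A B (ltl1 n1)).
Qed.


Fixpoint look (l : seq (nat * nat * nat)) (i j : nat) : nat :=
  if l is (a, b, c) :: l' then (if (a == i) && (b == j) then c else look l' i j) else 0.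

Definition tab2 : seq (nat * nat * nat) :=
  [:: (0,1,1); (0,4,1); (0,6,1); (0,24,1); (1,2,2); (1,5,2); (2,3,3); (3,4,3); (4,20,0); (5,6,0); (5,9,3); (6,7,0); (6,12,0); (7,8,2); (7,11,2); (8,9,1); (10,11,3); (10,14,0); (11,12,3); (12,13,1); (12,18,0); (13,14,1); (13,17,1); (15,16,2); (15,19,1); (16,17,3); (17,18,0); (18,19,0); (18,24,2); (19,23,3); (20,21,0); (20,24,2); (21,22,1); (22,23,3); (23,24,2)].

Definition C5N (a b : nat) := ((a.+1 %% 5) == b) || ((b.+1 %% 5) == a).
Definition HrN (a1 a2 b1 b2 : nat) :=
  ((a1 == b1) && C5N a2 b2) || [&& a1 == b2, a2 == b1 & C5N a1 b1]
  || [&& a1 == a2, b1 == b2 & C5N a1 b1].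
Definition gN (a1 a2 b1 b2 : nat) : nat :=
  look tab2 (minn (5 * a1 + a2) (5 * b1 + b2)) (maxn (5 * a1 + a2) (5 * b1 + b2)).

Definition g2 (p q : 'I_5 * 'I_5) : 'I_4 := Ordinal (ltn_pmod (gN p.1 p.2 q.1 q.2) (isT : 0 < 4)).

Lemma g2sym p q : g2 p q = g2 q p.
Proof. by apply: ord_inj; rewrite /= /gN minnC maxnC. Qed.

Lemma HrE p q : Hr p q = HrN p.1 p.2 q.1 q.2.
Proof. by []. Qed.

Lemma allI (P : nat -> bool) n : all P (iota 0 n) -> forall a, a < n -> P a.
Proof. by move/allP=> H a lt; apply: H; rewrite mem_iota. Qed.

Definition I5 := iota 0 5.

Lemma Hr_irr w : ~~ Hr w w.
Proof.
have B : all (fun a => all (fun b => ~~ HrN a b a b) I5) I5 by vm_compute.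
by rewrite HrE; move: (allI B (ltn_ord w.1)) => /allI /(_ _ (ltn_ord w.2)).
Qed.

Definition chkN := all (fun a1 => all (fun a2 => all (fun b1 => all (fun b2 =>
  HrN a1 a2 b1 b2 ==> all (fun c1 => all (fun c2 => HrN b1 b2 c1 c2 ==>
  all (fun d1 => all (fun d2 => HrN c1 c2 d1 d2 ==>
   (((a1 != c1) || (a2 != c2)) ==> ((b1 != d1) || (b2 != d2)) ==>
    ((a1 == b1) || (b1 == c1)) ==> ((b1 == c1) || (c1 == d1)) ==>
    (gN a1 a2 b1 b2 %% 4 != gN c1 c2 d1 d2 %% 4))) I5) I5) I5) I5) I5) I5) I5) I5.

Lemma chkN_ok : chkN. Proof. by vm_compute. Qed.

Lemma chk2 a b c d : Hr a b -> Hr b c -> Hr c d -> a != c -> b != d ->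
  lvr a b || lvr b c -> lvr b c || lvr c d -> g2 a b != g2 c d.
Proof.
rewrite !HrE => h1 h2 h3 n1 n2 o1 o2.
have B := chkN_ok.
move: (allI B (ltn_ord a.1)) => /allI /(_ _ (ltn_ord a.2)).
move=> /allI /(_ _ (ltn_ord b.1)) /allI /(_ _ (ltn_ord b.2)) /implyP /(_ h1).
move=> /allI /(_ _ (ltn_ord c.1)) /allI /(_ _ (ltn_ord c.2)) /implyP /(_ h2).
move=> /allI /(_ _ (ltn_ord d.1)) /allI /(_ _ (ltn_ord d.2)) /implyP /(_ h3).
case: a b c d n1 n2 o1 o2 {h1 h2 h3} => [a1 a2] [b1 b2] [c1 c2] [d1 d2] /=.
rewrite /lvr /= !xpair_eqE => n1 n2 o1 o2.
rewrite negb_and in n1; rewrite negb_and in n2.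
have n1' : (nat_of_ord a1 != c1) || (nat_of_ord a2 != c2) := n1.
have n2' : (nat_of_ord b1 != d1) || (nat_of_ord b2 != d2) := n2.
have o1' : (nat_of_ord a1 == b1) || (nat_of_ord b1 == c1) := o1.
have o2' : (nat_of_ord b1 == c1) || (nat_of_ord c1 == d1) := o2.
rewrite n1' n2' o1' o2' /= -val_eqE /=; exact: id.
Qed.


Lemma ub2 m : inj_edge_colorable (sierp_adj C5 m.+2) 4.
Proof.
exists (colf (@pj m) g2 ord0); apply: (transfer (h:=Hr) (lv:=lvr)).
- exact: hom.
- exact: Hr_irr.
- by move=> x y z a b c; case/andP: (LI a b c).
- by move=> x y z a b c; case/andP: (LI a b c).
- exact: g2sym.
- exact: chk2.
Qed.

Definition tab1 : seq (nat * nat * nat) := [:: (0,1,0); (1,2,0); (2,3,1); (3,4,1); (0,4,2)].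
Definition g1 (a b : 'I_5) : 'I_3 := Ordinal (ltn_pmod (look tab1 (minn a b) (maxn a b)) (isT : 0 < 3)).
Definition pj1 (w : {ffun 'I_1 -> 'I_5}) : 'I_5 := w ord0.

Definition chk1N := all (fun a => all (fun b => C5N a b ==> all (fun c => C5N b c ==>
  all (fun d => C5N c d ==> ((a != c) ==> (b != d) ==>
   (look tab1 (minn a b) (maxn a b) %% 3 != look tab1 (minn c d) (maxn c d) %% 3))) I5) I5) I5) I5.
Lemma chk1N_ok : chk1N. Proof. by vm_compute. Qed.

Lemma chk1 a b c d : C5 a b -> C5 b c -> C5 c d -> a != c -> b != d ->
  true || true -> true || true -> g1 a b != g1 c d.
Proof.
move=> h1 h2 h3 n1 n2 _ _.
have B := chk1N_ok.
move: (allI B (ltn_ord a)) => /allI /(_ _ (ltn_ord b)) /implyP /(_ h1).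
move=> /allI /(_ _ (ltn_ord c)) /implyP /(_ h2).
move=> /allI /(_ _ (ltn_ord d)) /implyP /(_ h3).
have n1' : (nat_of_ord a != c) := n1.
have n2' : (nat_of_ord b != d) := n2.
rewrite n1' n2' /= -val_eqE /=; exact: id.
Qed.

Lemma ub1 : inj_edge_colorable (sierp_adj C5 1) 3.
Proof.
exists (colf pj1 g1 ord0); apply: (transfer (h:=C5) (lv:=fun _ _ => true)).
- by move=> x y /adjE [d [_ A _]]; rewrite /pj1 -(ord1 d).
- exact: C5irr.
- move=> x y z _ _; apply: contra => /eqP E; apply/eqP/ffunP => i.
  by rewrite (ord1 i).
- by [].
- by move=> a b; rewrite /g1 minnC maxnC.
- exact: chk1.
Qed.

Lemma mono (V : finType) (e : rel V) j j' : inj_edge_colorable e j -> j <= j' ->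
  inj_edge_colorable e j'.
Proof.
move=> [c H] le; exists (fun S => widen_ord le (c S)).
move=> x y z u a b cc d f g h k /=; move: (H x y z u a b cc d f g h k).
by apply: contra => /eqP E; apply/eqP/ord_inj; move: (congr1 val E).
Qed.

Lemma index_of (V : finType) (e : rel V) k : inj_edge_colorable e k.+1 ->
  ~ inj_edge_colorable e k -> inj_chromatic_index_is e k.+1.
Proof.
move=> C N; split=> // j lt Cj; apply: N; exact: mono Cj _.
Qed.

Lemma confl (V : finType) (e : rel V) k (c : {set V} -> 'I_k) :
  inj_edge_coloring e c -> forall x y z u A B,
  e x y -> e y z -> e z u -> x != y -> y != z -> x != z -> u != y -> u != z ->
  A == [set x; y] -> B == [set z; u] -> nat_of_ord (c A) <> nat_of_ord (c B).
Proof.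
move=> H x y z u A B a b cc d f g h kk /eqP-> /eqP-> E.
by move: (H x y z u a b cc d f g h kk); rewrite (ord_inj E) eqxx.
Qed.

Definition v1 (a : nat) : {ffun 'I_1 -> 'I_5} := [ffun _ => inord a].

Lemma v1adj i j : i < 5 -> j < 5 -> C5N i j -> sierp_adj C5 1 (v1 i) (v1 j).
Proof.
move=> hi hj hc; apply/existsP; exists ord0; apply/and3P; split.
- by apply/forallP => k; rewrite (ord1 k).
- by rewrite !ffunE /C5 !inordK.
- by apply/forallP => k; rewrite (ord1 k).
Qed.

Lemma v1neq i j : i < 5 -> j < 5 -> i != j -> v1 i != v1 j.
Proof.
move=> hi hj; apply: contra => /eqP/ffunP/(_ ord0); rewrite /v1 !ffunE => /(congr1 (@nat_of_ord 5)).
by rewrite !inordK // => ->.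
Qed.

Ltac side1 := first [ exact: eqxx | apply: v1adj | apply: v1neq ].

Lemma lb1 : ~ inj_edge_colorable (sierp_adj C5 1) 2.
Proof.
move=> [c H].
have h0 : nat_of_ord (c [set v1 0; v1 1]) <> nat_of_ord (c [set v1 2; v1 3])
  by apply: (confl H (x:=v1 0) (y:=v1 1) (z:=v1 2) (u:=v1 3)); side1.
have h1 : nat_of_ord (c [set v1 1; v1 2]) <> nat_of_ord (c [set v1 3; v1 4])
  by apply: (confl H (x:=v1 1) (y:=v1 2) (z:=v1 3) (u:=v1 4)); side1.
have h2 : nat_of_ord (c [set v1 2; v1 3]) <> nat_of_ord (c [set v1 4; v1 0])
  by apply: (confl H (x:=v1 2) (y:=v1 3) (z:=v1 4) (u:=v1 0)); side1.
have h3 : nat_of_ord (c [set v1 3; v1 4]) <> nat_of_ord (c [set v1 0; v1 1])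
  by apply: (confl H (x:=v1 3) (y:=v1 4) (z:=v1 0) (u:=v1 1)); side1.
have h4 : nat_of_ord (c [set v1 4; v1 0]) <> nat_of_ord (c [set v1 1; v1 2])
  by apply: (confl H (x:=v1 4) (y:=v1 0) (z:=v1 1) (u:=v1 2)); side1.
move: h0 h1 h2 h3 h4; clear H.
case: (c [set v1 0; v1 1]) => a0 b0; case: (c [set v1 1; v1 2]) => a1 b1;
case: (c [set v1 2; v1 3]) => a2 b2; case: (c [set v1 3; v1 4]) => a3 b3;
case: (c [set v1 4; v1 0]) => a4 b4 /=.
by case: a0 b0 => [|[|]] // _; case: a1 b1 => [|[|]] // _; case: a2 b2 => [|[|]] // _;
  case: a3 b3 => [|[|]] // _; case: a4 b4 => [|[|]] // _.
Qed.


Definition emb m (w : {ffun 'I_2 -> 'I_5}) : {ffun 'I_m.+2 -> 'I_5} :=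
  [ffun i : 'I_m.+2 => if m <= i then w (inord (i - m)) else ord0].

Lemma embE m w (i : 'I_m.+2) : m <= i -> emb m w i = w (inord (i - m)).
Proof. by move=> h; rewrite ffunE h. Qed.

Lemma embE0 m w (i : 'I_m.+2) : i < m -> emb m w i = ord0.
Proof. by move=> h; rewrite ffunE leqNgt h. Qed.

Lemma bnd m (d : 'I_2) : d + m < m.+2.
Proof. have := ltn_ord d; lia. Qed.

Lemma emb_at m w (j : 'I_2) : emb m w (inord (j + m)) = w j.
Proof.
rewrite embE inordK ?bnd ?leq_addl // addnK.
by congr (w _); apply/val_inj; rewrite /= inordK.
Qed.

Lemma emb_adj m x y : sierp_adj C5 2 x y -> sierp_adj C5 m.+2 (emb m x) (emb m y).
Proof.
move/adjE => [d [A1 A2 A3]].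
apply/existsP; exists (inord (d + m)); apply/and3P; split.
- apply/forallP => i; apply/implyP; rewrite inordK ?bnd // => lt.
  case: (leqP m i) => hm.
  + rewrite !embE //; apply/eqP; apply: A1.
    have hi := ltn_ord i; rewrite inordK; lia.
  + by rewrite !embE0.
- by rewrite !emb_at.
- apply/forallP => i; apply/implyP; rewrite inordK ?bnd // => lt.
  have hm : m <= i by lia.
  rewrite !emb_at !embE //.
  have lt2 : i - m < 2 by have := ltn_ord i; lia.
  have := A3 (inord (i - m)); rewrite inordK // => /(_ ltac:(lia)) [-> ->].
  by rewrite !eqxx.
Qed.

Lemma emb_inj m : injective (emb m).
Proof.
move=> x y E; apply/ffunP => j.
by rewrite -(emb_at m x) -(emb_at m y) E.
Qed.

Lemma emb_col m k (c : {set {ffun 'I_m.+2 -> 'I_5}} -> 'I_k) :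
  inj_edge_coloring (sierp_adj C5 m.+2) c ->
  inj_edge_coloring (sierp_adj C5 2) (fun S => c (emb m @: S)).
Proof.
move=> H x y z u a b cc d f g h kk /=; rewrite !imsetU1 !imset_set1.
by apply: H; rewrite ?(inj_eq (@emb_inj m)) //; apply: emb_adj.
Qed.


Definition v2 (a b : nat) : {ffun 'I_2 -> 'I_5} :=
  [ffun i : 'I_2 => if val i == 0 then inord a else inord b].

Lemma v2adj a b c d : a < 5 -> b < 5 -> c < 5 -> d < 5 ->
  ((a == c) && C5N b d) || [&& a == d, b == c & C5N a c] ->
  sierp_adj C5 2 (v2 a b) (v2 c d).
Proof.
move=> ha hb hc hd /orP[/andP[/eqP ac bd]|/and3P[/eqP ad /eqP bc ac]]; apply/existsP.
- exists ord_max; apply/and3P; split.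
  + by apply/forallP => -[[|[|?]] hi] //=; rewrite !ffunE /= ac.
  + by rewrite !ffunE /= /C5 !inordK.
  + by apply/forallP => -[[|[|?]] hi].
- exists ord0; apply/and3P; split.
  + by apply/forallP => -[[|[|?]] hi].
  + by rewrite !ffunE /= /C5 !inordK.
  + by apply/forallP => -[[|[|?]] hi] //=; rewrite !ffunE /= bc ad !eqxx.
Qed.

Lemma v2neq a b c d : a < 5 -> b < 5 -> c < 5 -> d < 5 -> (a != c) || (b != d) ->
  v2 a b != v2 c d.
Proof.
move=> ha hb hc hd; apply: contraTneq => /ffunP E.
move: (E ord0) (E ord_max); rewrite !ffunE /= => /(congr1 (@nat_of_ord 5)) E0 /(congr1 (@nat_of_ord 5)).
by move: E0; rewrite !inordK // => -> ->; rewrite !eqxx.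
Qed.

Lemma set2C (T : finType) (a b : T) : [set a; b] = [set b; a].
Proof. by rewrite setUC. Qed.

Ltac side2 := first [ exact: eqxx | apply: v2adj | apply: v2neq ].
Ltac kill := match goal with H : ?x <> ?x |- _ => exact: (False_ind _ (H erefl)) end.

Lemma lb2 : ~ inj_edge_colorable (sierp_adj C5 2) 3.
Proof.
move=> [c H].
have h0 : nat_of_ord (c [set (v2 4 1); (v2 4 2)]) <> nat_of_ord (c [set (v2 0 4); (v2 4 0)]).
  rewrite (set2C (v2 4 1) (v2 4 2)).
  rewrite (set2C (v2 0 4) (v2 4 0)).
  by apply: (confl H (x:=(v2 4 2)) (y:=(v2 4 1)) (z:=(v2 4 0)) (u:=(v2 0 4))); side2.
have h1 : nat_of_ord (c [set (v2 3 0); (v2 3 1)]) <> nat_of_ord (c [set (v2 3 4); (v2 4 3)]).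
  rewrite (set2C (v2 3 0) (v2 3 1)).
  by apply: (confl H (x:=(v2 3 1)) (y:=(v2 3 0)) (z:=(v2 3 4)) (u:=(v2 4 3))); side2.
have h2 : nat_of_ord (c [set (v2 0 4); (v2 4 0)]) <> nat_of_ord (c [set (v2 0 2); (v2 0 3)]).
  rewrite (set2C (v2 0 4) (v2 4 0)).
  rewrite (set2C (v2 0 2) (v2 0 3)).
  by apply: (confl H (x:=(v2 4 0)) (y:=(v2 0 4)) (z:=(v2 0 3)) (u:=(v2 0 2))); side2.
have h3 : nat_of_ord (c [set (v2 4 1); (v2 4 2)]) <> nat_of_ord (c [set (v2 3 4); (v2 4 3)]).
  rewrite (set2C (v2 3 4) (v2 4 3)).
  by apply: (confl H (x:=(v2 4 1)) (y:=(v2 4 2)) (z:=(v2 4 3)) (u:=(v2 3 4))); side2.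
have h4 : nat_of_ord (c [set (v2 2 2); (v2 2 3)]) <> nat_of_ord (c [set (v2 3 2); (v2 3 3)]).
  by apply: (confl H (x:=(v2 2 2)) (y:=(v2 2 3)) (z:=(v2 3 2)) (u:=(v2 3 3))); side2.
have h5 : nat_of_ord (c [set (v2 0 0); (v2 0 4)]) <> nat_of_ord (c [set (v2 4 0); (v2 4 1)]).
  by apply: (confl H (x:=(v2 0 0)) (y:=(v2 0 4)) (z:=(v2 4 0)) (u:=(v2 4 1))); side2.
have h6 : nat_of_ord (c [set (v2 0 3); (v2 0 4)]) <> nat_of_ord (c [set (v2 0 0); (v2 0 1)]).
  by apply: (confl H (x:=(v2 0 3)) (y:=(v2 0 4)) (z:=(v2 0 0)) (u:=(v2 0 1))); side2.
have h7 : nat_of_ord (c [set (v2 4 0); (v2 4 1)]) <> nat_of_ord (c [set (v2 4 3); (v2 4 4)]).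
  rewrite (set2C (v2 4 0) (v2 4 1)).
  rewrite (set2C (v2 4 3) (v2 4 4)).
  by apply: (confl H (x:=(v2 4 1)) (y:=(v2 4 0)) (z:=(v2 4 4)) (u:=(v2 4 3))); side2.
have h8 : nat_of_ord (c [set (v2 2 1); (v2 2 2)]) <> nat_of_ord (c [set (v2 2 0); (v2 2 4)]).
  rewrite (set2C (v2 2 1) (v2 2 2)).
  by apply: (confl H (x:=(v2 2 2)) (y:=(v2 2 1)) (z:=(v2 2 0)) (u:=(v2 2 4))); side2.
have h9 : nat_of_ord (c [set (v2 0 2); (v2 0 3)]) <> nat_of_ord (c [set (v2 0 0); (v2 0 1)]).
  rewrite (set2C (v2 0 2) (v2 0 3)).
  rewrite (set2C (v2 0 0) (v2 0 1)).
  by apply: (confl H (x:=(v2 0 3)) (y:=(v2 0 2)) (z:=(v2 0 1)) (u:=(v2 0 0))); side2.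
have h10 : nat_of_ord (c [set (v2 2 3); (v2 3 2)]) <> nat_of_ord (c [set (v2 3 3); (v2 3 4)]).
  by apply: (confl H (x:=(v2 2 3)) (y:=(v2 3 2)) (z:=(v2 3 3)) (u:=(v2 3 4))); side2.
have h11 : nat_of_ord (c [set (v2 0 0); (v2 0 4)]) <> nat_of_ord (c [set (v2 0 2); (v2 0 3)]).
  rewrite (set2C (v2 0 2) (v2 0 3)).
  by apply: (confl H (x:=(v2 0 0)) (y:=(v2 0 4)) (z:=(v2 0 3)) (u:=(v2 0 2))); side2.
have h12 : nat_of_ord (c [set (v2 3 1); (v2 3 2)]) <> nat_of_ord (c [set (v2 2 3); (v2 2 4)]).
  by apply: (confl H (x:=(v2 3 1)) (y:=(v2 3 2)) (z:=(v2 2 3)) (u:=(v2 2 4))); side2.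
have h13 : nat_of_ord (c [set (v2 3 1); (v2 3 2)]) <> nat_of_ord (c [set (v2 3 3); (v2 3 4)]).
  by apply: (confl H (x:=(v2 3 1)) (y:=(v2 3 2)) (z:=(v2 3 3)) (u:=(v2 3 4))); side2.
have h14 : nat_of_ord (c [set (v2 0 3); (v2 0 4)]) <> nat_of_ord (c [set (v2 4 0); (v2 4 4)]).
  by apply: (confl H (x:=(v2 0 3)) (y:=(v2 0 4)) (z:=(v2 4 0)) (u:=(v2 4 4))); side2.
have h15 : nat_of_ord (c [set (v2 3 4); (v2 4 3)]) <> nat_of_ord (c [set (v2 3 2); (v2 3 3)]).
  rewrite (set2C (v2 3 4) (v2 4 3)).
  rewrite (set2C (v2 3 2) (v2 3 3)).
  by apply: (confl H (x:=(v2 4 3)) (y:=(v2 3 4)) (z:=(v2 3 3)) (u:=(v2 3 2))); side2.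
have h16 : nat_of_ord (c [set (v2 2 2); (v2 2 3)]) <> nat_of_ord (c [set (v2 2 0); (v2 2 4)]).
  rewrite (set2C (v2 2 0) (v2 2 4)).
  by apply: (confl H (x:=(v2 2 2)) (y:=(v2 2 3)) (z:=(v2 2 4)) (u:=(v2 2 0))); side2.
have h17 : nat_of_ord (c [set (v2 2 3); (v2 2 4)]) <> nat_of_ord (c [set (v2 3 2); (v2 3 3)]).
  rewrite (set2C (v2 2 3) (v2 2 4)).
  by apply: (confl H (x:=(v2 2 4)) (y:=(v2 2 3)) (z:=(v2 3 2)) (u:=(v2 3 3))); side2.
have h18 : nat_of_ord (c [set (v2 2 1); (v2 2 2)]) <> nat_of_ord (c [set (v2 2 3); (v2 2 4)]).
  by apply: (confl H (x:=(v2 2 1)) (y:=(v2 2 2)) (z:=(v2 2 3)) (u:=(v2 2 4))); side2.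
have h19 : nat_of_ord (c [set (v2 4 2); (v2 4 3)]) <> nat_of_ord (c [set (v2 3 3); (v2 3 4)]).
  rewrite (set2C (v2 3 3) (v2 3 4)).
  by apply: (confl H (x:=(v2 4 2)) (y:=(v2 4 3)) (z:=(v2 3 4)) (u:=(v2 3 3))); side2.
have h20 : nat_of_ord (c [set (v2 2 3); (v2 3 2)]) <> nat_of_ord (c [set (v2 2 0); (v2 2 4)]).
  rewrite (set2C (v2 2 3) (v2 3 2)).
  rewrite (set2C (v2 2 0) (v2 2 4)).
  by apply: (confl H (x:=(v2 3 2)) (y:=(v2 2 3)) (z:=(v2 2 4)) (u:=(v2 2 0))); side2.
have h21 : nat_of_ord (c [set (v2 2 3); (v2 3 2)]) <> nat_of_ord (c [set (v2 3 0); (v2 3 1)]).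
  rewrite (set2C (v2 3 0) (v2 3 1)).
  by apply: (confl H (x:=(v2 2 3)) (y:=(v2 3 2)) (z:=(v2 3 1)) (u:=(v2 3 0))); side2.
have h22 : nat_of_ord (c [set (v2 4 3); (v2 4 4)]) <> nat_of_ord (c [set (v2 0 4); (v2 4 0)]).
  rewrite (set2C (v2 0 4) (v2 4 0)).
  by apply: (confl H (x:=(v2 4 3)) (y:=(v2 4 4)) (z:=(v2 4 0)) (u:=(v2 0 4))); side2.
have h23 : nat_of_ord (c [set (v2 4 1); (v2 4 2)]) <> nat_of_ord (c [set (v2 4 0); (v2 4 4)]).
  rewrite (set2C (v2 4 1) (v2 4 2)).
  by apply: (confl H (x:=(v2 4 2)) (y:=(v2 4 1)) (z:=(v2 4 0)) (u:=(v2 4 4))); side2.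
have h24 : nat_of_ord (c [set (v2 4 3); (v2 4 4)]) <> nat_of_ord (c [set (v2 3 0); (v2 3 4)]).
  rewrite (set2C (v2 4 3) (v2 4 4)).
  rewrite (set2C (v2 3 0) (v2 3 4)).
  by apply: (confl H (x:=(v2 4 4)) (y:=(v2 4 3)) (z:=(v2 3 4)) (u:=(v2 3 0))); side2.
have h25 : nat_of_ord (c [set (v2 4 2); (v2 4 3)]) <> nat_of_ord (c [set (v2 3 0); (v2 3 4)]).
  rewrite (set2C (v2 3 0) (v2 3 4)).
  by apply: (confl H (x:=(v2 4 2)) (y:=(v2 4 3)) (z:=(v2 3 4)) (u:=(v2 3 0))); side2.
have h26 : nat_of_ord (c [set (v2 2 1); (v2 2 2)]) <> nat_of_ord (c [set (v2 2 3); (v2 3 2)]).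
  by apply: (confl H (x:=(v2 2 1)) (y:=(v2 2 2)) (z:=(v2 2 3)) (u:=(v2 3 2))); side2.
have h27 : nat_of_ord (c [set (v2 4 0); (v2 4 4)]) <> nat_of_ord (c [set (v2 3 4); (v2 4 3)]).
  rewrite (set2C (v2 3 4) (v2 4 3)).
  by apply: (confl H (x:=(v2 4 0)) (y:=(v2 4 4)) (z:=(v2 4 3)) (u:=(v2 3 4))); side2.
have h28 : nat_of_ord (c [set (v2 4 2); (v2 4 3)]) <> nat_of_ord (c [set (v2 4 0); (v2 4 1)]).
  rewrite (set2C (v2 4 2) (v2 4 3)).
  rewrite (set2C (v2 4 0) (v2 4 1)).
  by apply: (confl H (x:=(v2 4 3)) (y:=(v2 4 2)) (z:=(v2 4 1)) (u:=(v2 4 0))); side2.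
have h29 : nat_of_ord (c [set (v2 4 2); (v2 4 3)]) <> nat_of_ord (c [set (v2 4 0); (v2 4 4)]).
  rewrite (set2C (v2 4 0) (v2 4 4)).
  by apply: (confl H (x:=(v2 4 2)) (y:=(v2 4 3)) (z:=(v2 4 4)) (u:=(v2 4 0))); side2.
have h30 : nat_of_ord (c [set (v2 0 0); (v2 0 4)]) <> nat_of_ord (c [set (v2 4 0); (v2 4 4)]).
  by apply: (confl H (x:=(v2 0 0)) (y:=(v2 0 4)) (z:=(v2 4 0)) (u:=(v2 4 4))); side2.
have h31 : nat_of_ord (c [set (v2 4 0); (v2 4 1)]) <> nat_of_ord (c [set (v2 0 3); (v2 0 4)]).
  rewrite (set2C (v2 4 0) (v2 4 1)).
  rewrite (set2C (v2 0 3) (v2 0 4)).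
  by apply: (confl H (x:=(v2 4 1)) (y:=(v2 4 0)) (z:=(v2 0 4)) (u:=(v2 0 3))); side2.
have h32 : nat_of_ord (c [set (v2 3 0); (v2 3 4)]) <> nat_of_ord (c [set (v2 3 2); (v2 3 3)]).
  rewrite (set2C (v2 3 2) (v2 3 3)).
  by apply: (confl H (x:=(v2 3 0)) (y:=(v2 3 4)) (z:=(v2 3 3)) (u:=(v2 3 2))); side2.
have h33 : nat_of_ord (c [set (v2 3 3); (v2 3 4)]) <> nat_of_ord (c [set (v2 3 0); (v2 3 1)]).
  by apply: (confl H (x:=(v2 3 3)) (y:=(v2 3 4)) (z:=(v2 3 0)) (u:=(v2 3 1))); side2.
have h34 : nat_of_ord (c [set (v2 0 4); (v2 4 0)]) <> nat_of_ord (c [set (v2 0 0); (v2 0 1)]).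
  rewrite (set2C (v2 0 4) (v2 4 0)).
  by apply: (confl H (x:=(v2 4 0)) (y:=(v2 0 4)) (z:=(v2 0 0)) (u:=(v2 0 1))); side2.
have h35 : nat_of_ord (c [set (v2 3 0); (v2 3 1)]) <> nat_of_ord (c [set (v2 3 2); (v2 3 3)]).
  by apply: (confl H (x:=(v2 3 0)) (y:=(v2 3 1)) (z:=(v2 3 2)) (u:=(v2 3 3))); side2.
have h36 : nat_of_ord (c [set (v2 3 3); (v2 3 4)]) <> nat_of_ord (c [set (v2 4 3); (v2 4 4)]).
  by apply: (confl H (x:=(v2 3 3)) (y:=(v2 3 4)) (z:=(v2 4 3)) (u:=(v2 4 4))); side2.
have h37 : nat_of_ord (c [set (v2 4 1); (v2 4 2)]) <> nat_of_ord (c [set (v2 4 3); (v2 4 4)]).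
  by apply: (confl H (x:=(v2 4 1)) (y:=(v2 4 2)) (z:=(v2 4 3)) (u:=(v2 4 4))); side2.
have h38 : nat_of_ord (c [set (v2 3 1); (v2 3 2)]) <> nat_of_ord (c [set (v2 3 0); (v2 3 4)]).
  rewrite (set2C (v2 3 1) (v2 3 2)).
  by apply: (confl H (x:=(v2 3 2)) (y:=(v2 3 1)) (z:=(v2 3 0)) (u:=(v2 3 4))); side2.
have h39 : nat_of_ord (c [set (v2 3 1); (v2 3 2)]) <> nat_of_ord (c [set (v2 2 2); (v2 2 3)]).
  rewrite (set2C (v2 2 2) (v2 2 3)).
  by apply: (confl H (x:=(v2 3 1)) (y:=(v2 3 2)) (z:=(v2 2 3)) (u:=(v2 2 2))); side2.
move: h0 h1 h2 h3 h4 h5 h6 h7 h8 h9 h10 h11 h12 h13 h14 h15 h16 h17 h18 h19 h20 h21 h22 h23 h24 h25 h26 h27 h28 h29 h30 h31 h32 h33 h34 h35 h36 h37 h38 h39; clear H.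
case: (c [set (v2 4 3); (v2 4 4)]) => a0 b0 /=.
case: (c [set (v2 3 3); (v2 3 4)]) => a1 b1 /=.
case: (c [set (v2 4 2); (v2 4 3)]) => a2 b2 /=.
case: (c [set (v2 4 0); (v2 4 1)]) => a3 b3 /=.
case: (c [set (v2 3 0); (v2 3 4)]) => a4 b4 /=.
case: (c [set (v2 3 1); (v2 3 2)]) => a5 b5 /=.
case: (c [set (v2 4 0); (v2 4 4)]) => a6 b6 /=.
case: (c [set (v2 4 1); (v2 4 2)]) => a7 b7 /=.
case: (c [set (v2 3 4); (v2 4 3)]) => a8 b8 /=.
case: (c [set (v2 3 2); (v2 3 3)]) => a9 b9 /=.
case: (c [set (v2 3 0); (v2 3 1)]) => a10 b10 /=.
case: (c [set (v2 2 3); (v2 3 2)]) => a11 b11 /=.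
case: (c [set (v2 0 4); (v2 4 0)]) => a12 b12 /=.
case: (c [set (v2 2 3); (v2 2 4)]) => a13 b13 /=.
case: (c [set (v2 2 2); (v2 2 3)]) => a14 b14 /=.
case: (c [set (v2 2 1); (v2 2 2)]) => a15 b15 /=.
case: (c [set (v2 2 0); (v2 2 4)]) => a16 b16 /=.
case: (c [set (v2 0 3); (v2 0 4)]) => a17 b17 /=.
case: (c [set (v2 0 0); (v2 0 4)]) => a18 b18 /=.
case: (c [set (v2 0 2); (v2 0 3)]) => a19 b19 /=.
case: (c [set (v2 0 0); (v2 0 1)]) => a20 b20 /=.
move=> h0 h1 h2 h3 h4 h5 h6 h7 h8 h9 h10 h11 h12 h13 h14 h15 h16 h17 h18 h19 h20 h21 h22 h23 h24 h25 h26 h27 h28 h29 h30 h31 h32 h33 h34 h35 h36 h37 h38 h39.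
(destruct a0 as [|[|[|a0]]]; [try kill|try kill|try kill|discriminate b0]);
(destruct a1 as [|[|[|a1]]]; [try kill|try kill|try kill|discriminate b1]);
(destruct a2 as [|[|[|a2]]]; [try kill|try kill|try kill|discriminate b2]);
(destruct a3 as [|[|[|a3]]]; [try kill|try kill|try kill|discriminate b3]);
(destruct a4 as [|[|[|a4]]]; [try kill|try kill|try kill|discriminate b4]);
(destruct a5 as [|[|[|a5]]]; [try kill|try kill|try kill|discriminate b5]);
(destruct a6 as [|[|[|a6]]]; [try kill|try kill|try kill|discriminate b6]);
(destruct a7 as [|[|[|a7]]]; [try kill|try kill|try kill|discriminate b7]);
(destruct a8 as [|[|[|a8]]]; [try kill|try kill|try kill|discriminate b8]);
(destruct a9 as [|[|[|a9]]]; [try kill|try kill|try kill|discriminate b9]);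
(destruct a10 as [|[|[|a10]]]; [try kill|try kill|try kill|discriminate b10]);
(destruct a11 as [|[|[|a11]]]; [try kill|try kill|try kill|discriminate b11]);
(destruct a12 as [|[|[|a12]]]; [try kill|try kill|try kill|discriminate b12]);
(destruct a13 as [|[|[|a13]]]; [try kill|try kill|try kill|discriminate b13]);
(destruct a14 as [|[|[|a14]]]; [try kill|try kill|try kill|discriminate b14]);
(destruct a15 as [|[|[|a15]]]; [try kill|try kill|try kill|discriminate b15]);
(destruct a16 as [|[|[|a16]]]; [try kill|try kill|try kill|discriminate b16]);
(destruct a17 as [|[|[|a17]]]; [try kill|try kill|try kill|discriminate b17]);
(destruct a18 as [|[|[|a18]]]; [try kill|try kill|try kill|discriminate b18]);
(destruct a19 as [|[|[|a19]]]; [try kill|try kill|try kill|discriminate b19]);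
(destruct a20 as [|[|[|a20]]]; [try kill|try kill|try kill|discriminate b20]).
Qed.


Theorem mainTheorem8 :
  inj_chromatic_index_is (sierp_adj C5 1) 3 /\
  (forall n : nat, 2 <= n -> inj_chromatic_index_is (sierp_adj C5 n) 4).
Proof.
split.
- exact: (index_of ub1 lb1).
- case=> [|[|m]] // _.
  apply: (index_of (ub2 m)) => -[c H].
  apply: lb2; exists (fun S : {set {ffun 'I_2 -> 'I_5}} => c (emb m @: S)); exact: emb_col.
Qed.
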